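(* Let $G(\circ)$, $G(\ast)$ be groups on a set $G$ of size $n$ and let $a\in G$ with $\sigma=|a|_\circ>|a|_\ast=\tau$. Then $\mathrm{dist}_a\ge (n/\sigma)\lceil\sigma/\tau\rceil\ge n/\tau$.
   Context: $|a|_\circ$ denotes the order of $a$ in $G(\circ)$, $|a|_\ast$ its order in $G(\ast)$. $\mathrm{dist}_a=|\{b\in G: a\circ b\ne a\ast b\}|$. *)

(* Defs.v *)
From HB Require Import structures.
From mathcomp Require Import all_boot all_order all_algebra.
Set Implicit Arguments. Unset Strict Implicit. Unset Printing Implicit Defensive.

Definition is_group (T : Type) (op : T -> T -> T) (e : T) : Prop :=
  associative op /\ left_id e op /\ right_id e op /\
  (forall x, exists y, op x y = e /\ op y x = e).

Definition gpow (T : Type) (op : T -> T -> T) (e a : T) (k : nat) : T :=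
  iter k (op a) e.

Definition is_order (T : Type) (op : T -> T -> T) (e a : T) (k : nat) : Prop :=
  (0 < k)%N /\ gpow op e a k = e /\
  (forall j, (0 < j)%N -> (j < k)%N -> gpow op e a j <> e).

Definition dist_at (T : finType) (op1 op2 : T -> T -> T) (a : T) : nat :=
  #|[set b : T | op1 a b != op2 a b]|.

(* Main.v *)
Require Import Defs.
From HB Require Import structures.
From mathcomp Require Import all_boot all_order all_algebra.
Import Order.TTheory GRing.Theory Num.Theory.

Section Aux.
Variables (T : finType) (op : T -> T -> T) (e : T).
Hypothesis G : is_group op e.

Lemma iter_op a k y : iter k (op a) y = op (gpow op e a k) y.
Proof.
case: G => [A [Hl _]].
elim: k => [|k IH] /=; first by rewrite /gpow /= Hl.
by rewrite IH /gpow /= A.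
Qed.

Lemma cancel_r g y : op g y = y -> g = e.
Proof.
case: G => [A [Hl [Hr Hi]]] H.
have [z [Hz _]] := Hi y.
have : op (op g y) z = op y z by rewrite H.
by rewrite -A Hz Hr.
Qed.

Lemma op_inj a : injective (op a).
Proof.
case: G => [A [Hl [Hr Hi]]] x1 x2 H.
have [b [_ Hb]] := Hi a.
by rewrite -(Hl x1) -(Hl x2) -Hb -!A H.
Qed.
End Aux.
Arguments iter_op {T op e} G a k y.
Arguments cancel_r {T op e} G g y.
Arguments op_inj {T op e} G a.

Lemma shift_sum (h : nat -> nat) s t :
  (forall j, h (j + s.+1) = h j) ->
  \sum_(i < s.+1) h (i + t) = \sum_(i < s.+1) h i.
Proof.
move=> Hp; elim: t => [|t IH]. 
  by under eq_bigr do rewrite addn0.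
rewrite -IH big_ord_recr big_ord_recl /= add0n.
rewrite addnC; congr (_ + _).
  by rewrite addnS -addSn addnC Hp.
by apply: eq_bigr => i _; rewrite /bump /= addnS addSn.
Qed.

Theorem lemma4p11 (T : finType) (op1 op2 : T -> T -> T) (e1 e2 : T)
  (a : T) (sigma tau : nat) :
  is_group op1 e1 -> is_group op2 e2 ->
  is_order op1 e1 a sigma -> is_order op2 e2 a tau ->
  (tau < sigma)%N ->
  let n := #|T| in
  ((n%:R / sigma%:R) * (Num.ceil (sigma%:R / tau%:R : rat))%:~R
     <= (dist_at op1 op2 a)%:R :> rat)%R /\
  (n%:R / tau%:R <= (n%:R / sigma%:R) * (Num.ceil (sigma%:R / tau%:R : rat))%:~R
     :> rat)%R.
Proof.
move=> G1 G2 [s0 [sE sM]] [t0 [tE tM]] lts n.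
set D := [set b | op1 a b != op2 a b].
set L := op1 a.
pose h x j := ((iter j L x) \in D : nat).
pose d x := \sum_(i < sigma) h x i.
have Lper : forall x j, iter (j + sigma) L x = iter j L x.
  move=> x j; rewrite iterD.
  by rewrite /L (iter_op G1 _ sigma) sE; case: G1 => [_ [Hl _]]; rewrite Hl.
have win : forall x i, (0 < \sum_(t < tau) h x (i + t))%N.
  move=> x i; rewrite lt0n; apply/negP => /eqP H0.
  set y := iter i L x.
  have Hagree : forall t, (t < tau)%N -> op1 a (iter t L y) = op2 a (iter t L y).
    move=> t Ht.
    have := H0; rewrite (bigD1 (Ordinal Ht)) //= => /eqP; rewrite addn_eq0.
    case/andP => /eqP H1 _.
    move: H1; rewrite /h -iterD addnC.
    by rewrite inE; case: eqP.
  have Hit : forall t, (t <= tau)%N -> iter t (op2 a) y = iter t L y.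
    elim=> [//|t IH] Ht /=.
    by rewrite IH ?(ltnW Ht) // -Hagree.
  have := Hit tau (leqnn _).
  rewrite (iter_op G2) tE; case: G2 => [_ [Hl2 _]]; rewrite Hl2.
  rewrite /L (iter_op G1) => /esym /(cancel_r G1).
  exact: sM.
have dbound : forall x, (sigma <= tau * d x)%N.
  move=> x.
  have -> : sigma = (\sum_(i < sigma) 1)%N by rewrite sum1_card card_ord.
  apply: (@leq_trans (\sum_(i < sigma) \sum_(t < tau) h x (i + t))).
    by apply: leq_sum => i _; exact: win.
  rewrite exchange_big /=.
  rewrite -[X in (_ <= X * _)%N]card_ord -sum1_card big_distrl /=.
  apply: leq_sum => t _.
  have [s Es] : exists s, sigma = s.+1 by exists sigma.-1; rewrite prednK.
  rewrite mul1n /d Es (shift_sum (h x)) // => j.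
  by rewrite /h -Es Lper.
have Linj : forall i, injective (iter i L).
  elim=> [|i IH] x1 x2 //= H.
  by apply: IH; apply: (op_inj G1 a).
have sumd : (\sum_x d x = sigma * #|D|)%N.
  rewrite /d exchange_big /=.
  rewrite -[X in (X * _)%N]card_ord -sum_nat_const.
  apply: eq_bigr => i _.
  rewrite -sum1_card [RHS](reindex_inj (Linj i)) /= [RHS]big_mkcond /=.
  by apply: eq_bigr => x _; rewrite /h; case: (iter i L x \in D).
set c := Num.ceil _.
have sg0 : (0 < sigma%:R :> rat)%R by rewrite ltr0n.
have tg0 : (0 < tau%:R :> rat)%R by rewrite ltr0n.
have cd : forall x, (c%:~R <= (d x)%:R :> rat)%R.
  move=> x.
  have -> : ((d x)%:R = (d x)%:Z%:~R :> rat)%R by [].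
  rewrite ler_int ceil_le_int ler_pdivrMr // -natrM ler_nat mulnC.
  exact: dbound.
split.
  rewrite mulrAC ler_pdivrMr // /dist_at -/D -natrM mulnC -sumd natr_sum.
  rewrite /n mulrC mulr_natr -sumr_const.
  by apply: ler_sum => x _; exact: cd.
have -> : (n%:R / tau%:R = n%:R / sigma%:R * (sigma%:R / tau%:R) :> rat)%R.
  by rewrite mulrA divfK // gt_eqF.
apply: ler_wpM2l; last exact: ceil_ge.
by rewrite divr_ge0.
Qed.
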